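(* Every financial system with payment priorities (as defined in the context, for any number $P\ge 1$ of priority levels) has at least one solution, i.e. there exists $r\in[0,1]^V$ such that for every bank $v\in V$: $r_v=1$ if $a_v(r)\ge l_v(r)$, and $r_v=a_v(r)/l_v(r)$ if $a_v(r)<l_v(r)$.
   Context: A financial system with payment priorities consists of: a finite set $V$ of banks; external assets $e_v\ge 0$ for each $v\in V$; a number $P\ge 1$ of priority levels; and a finite set of contracts, each of which is either a debt contract from a debtor $u$ to a creditor $v\neq u$ with weight $c>0$, or a credit default swap (CDS) from a debtor $u$ to a creditor $v\neq u$ in reference to a bank $w\notin\{u,v\}$ (the reference entity) with weight $c>0$. Every contract has a priority in $\{1,\dots,P\}$ (1 is the highest priority). It is assumed that every bank that is the reference entity of some CDS is the debtor of at least one debt contract of positive weight. Given a recovery rate vector $r\in[0,1]^V$: the liability of a contract $k$ is $l_k(r)=c$ if $k$ is a debt of weight $c$, and $l_k(r)=c\,(1-r_w)$ if $k$ is a CDS of weight $c$ in reference to $w$. For a bank $v$, $l_v(r)$ is the sum of the liabilities of the contracts with debtor $v$; $l_v^{(\rho)}(r)$ is the sum of the liabilities of contracts with debtor $v$ and priority $\rho$; and $l_v^{(\le\rho)}(r)=\sum_{i=1}^{\rho}l_v^{(i)}(r)$ (with $l_v^{(\le 0)}=0$). The payment on a contract $k$ with debtor $v$ and priority $\rho$ is $p_k(r)=l_k(r)\cdot\min\{1,\max\{0,(r_v l_v(r)-l_v^{(\le\rho-1)}(r))/l_v^{(\rho)}(r)\}\}$ (and $p_k(r)=0$ if $l_v^{(\rho)}(r)=0$);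 i.e. the amount $r_v l_v(r)$ paid out by $v$ covers liabilities level by level in order of priority, proportionally to liabilities within a level. The assets of $v$ are $a_v(r)=e_v+\sum_k p_k(r)$, summing over contracts $k$ with creditor $v$. A vector $r\in[0,1]^V$ is a solution (clearing vector) if for every $v\in V$: $r_v=1$ when $a_v(r)\ge l_v(r)$, and $r_v=a_v(r)/l_v(r)$ when $a_v(r)<l_v(r)$. The payoff of $v$ is $q_v(r)=\max\{a_v(r)-l_v(r),0\}$. When $P=1$, payments reduce to $p_k(r)=r_v\,l_k(r)$ (principle of proportionality); this is called the base model. *)

(* Defs.v *)
From Stdlib Require Import Reals Lra Lia List Arith.
Open Scope R_scope.

(* Banks are the natural numbers 0 .. n-1 (a finite set V of size n).
   Priority levels are 1 .. P (1 = highest priority). *)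

Inductive contract_kind : Type :=
  | Debt : contract_kind
  | CDS : nat -> contract_kind.   (* CDS in reference to bank w *)

Record contract : Type := mkContract {
  kind : contract_kind;
  debtor : nat;
  creditor : nat;
  weight : R;
  prio : nat
}.

(* A financial system with payment priorities. The finite set of contracts
   is given as a list (distinct list entries are distinct contracts). *)
Record system : Type := mkSystem {
  nbanks : nat;
  ext : nat -> R;
  nprio : nat;
  contracts : list contract
}.

Definition well_formed (FS : system) : Prop :=
  (1 <= nprio FS)%nat /\
  (forall v, (v < nbanks FS)%nat -> 0 <= ext FS v) /\
  (forall k, In k (contracts FS) ->
     (debtor k < nbanks FS)%nat /\ (creditor k < nbanks FS)%nat /\
     debtor k <> creditor k /\ 0 < weight k /\
     (1 <= prio k <= nprio FS)%nat /\
     (forall w, kind k = CDS w ->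
        (w < nbanks FS)%nat /\ w <> debtor k /\ w <> creditor k)) /\
  (forall k w, In k (contracts FS) -> kind k = CDS w ->
     exists k', In k' (contracts FS) /\ kind k' = Debt /\ debtor k' = w /\
                0 < weight k').

Definition sumR {A : Type} (f : A -> R) (l : list A) : R :=
  fold_right (fun x acc => f x + acc) 0 l.

Definition liab (r : nat -> R) (k : contract) : R :=
  match kind k with
  | Debt => weight k
  | CDS w => weight k * (1 - r w)
  end.

Definition liab_bank (FS : system) (r : nat -> R) (v : nat) : R :=
  sumR (liab r) (filter (fun k => Nat.eqb (debtor k) v) (contracts FS)).

Definition liab_prio (FS : system) (r : nat -> R) (v rho : nat) : R :=
  sumR (liab r)
    (filter (fun k => andb (Nat.eqb (debtor k) v) (Nat.eqb (prio k) rho)) (contracts FS)).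

Fixpoint liab_le (FS : system) (r : nat -> R) (v rho : nat) : R :=
  match rho with
  | O => 0
  | Datatypes.S rho' => liab_le FS r v rho' + liab_prio FS r v (Datatypes.S rho')
  end.

Definition payment (FS : system) (r : nat -> R) (k : contract) : R :=
  let v := debtor k in
  let rho := prio k in
  if Req_EM_T (liab_prio FS r v rho) 0 then 0
  else liab r k *
       Rmin 1 (Rmax 0 ((r v * liab_bank FS r v - liab_le FS r v (rho - 1))
                       / liab_prio FS r v rho)).

Definition assets (FS : system) (r : nat -> R) (v : nat) : R :=
  ext FS v + sumR (payment FS r)
                 (filter (fun k => Nat.eqb (creditor k) v) (contracts FS)).

Definition is_solution (FS : system) (r : nat -> R) : Prop :=
  forall v, (v < nbanks FS)%nat ->
    0 <= r v <= 1 /\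
    (assets FS r v >= liab_bank FS r v -> r v = 1) /\
    (assets FS r v < liab_bank FS r v -> r v = assets FS r v / liab_bank FS r v).

(* Main.v *)
Require Import Defs.
From Stdlib Require Import Reals Lra List ClassicalEpsilon Classical.
From Coquelicot Require Compactness.
From mathcomp Require Import ssreflect ssrfun ssrbool eqtype ssrnat seq.
From mathcomp Require Import zify.
Local Close Scope R_scope.

Set Implicit Arguments. Unset Strict Implicit.

Lemma perm_invol (t : nat -> nat) N p :
  (forall q, q < N -> t q < N) -> (forall q, q < N -> t (t q) = q) ->
  perm_eq p (iota 0 N) -> perm_eq (map t p) (iota 0 N).
Proof.
move=> tN tt pP.
apply: perm_trans (perm_map t pP) _.
apply: uniq_perm.
- rewrite map_inj_in_uniq ?iota_uniq //.
  move=> x y; rewrite !mem_iota /= !add0n => xN yN txy.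
  by rewrite -(tt x xN) txy tt.
- exact: iota_uniq.
move=> x; rewrite mem_iota add0n /=.
apply/mapP/idP.
- by case=> y; rewrite mem_iota add0n /= => yN ->; apply: tN.
- move=> xN; exists (t x); first by rewrite mem_iota add0n /= tN.
  by rewrite tt.
Qed.

Lemma count_invol (T : eqType) (f : T -> T) (P : pred T) (l : seq T) :
  uniq l -> (forall x, x \in l -> f x \in l) ->
  (forall x, x \in l -> f (f x) = x) ->
  (forall x, x \in l -> P (f x) = P x) ->
  ~~ odd (count (fun x => P x && (f x != x)) l).
Proof.
move=> ul fl ffl Pf.
rewrite -size_filter.
set l' := filter _ l.
have ul' : uniq l' by rewrite filter_uniq.
have fl' : forall x, x \in l' -> f x \in l'.
  move=> x; rewrite !mem_filter => /andP[/andP[Px fx] xl].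
  rewrite Pf // Px /= ffl // fl // andbT eq_sym //.
have ffl' : forall x, x \in l' -> f (f x) = x.
  by move=> x; rewrite mem_filter => /andP[_ /ffl].
have nfix : forall x, x \in l' -> f x != x.
  by move=> x; rewrite mem_filter => /andP[/andP[_ ->]].
clearbody l'; clear -ul' fl' ffl' nfix.
move: {2}(size l') (leqnn (size l')) => n; elim: n l' ul' fl' ffl' nfix => [|n IH] l' ul' fl' ffl' nfix.
  by rewrite leqn0 => /eqP ->.
case: l' ul' fl' ffl' nfix => [//|x t] ul' fl' ffl' nfix /= szt.
have fxt : f x \in t.
  have := fl' x (mem_head _ _); rewrite inE => /orP[/eqP e|//].
  by have := nfix x (mem_head _ _); rewrite e eqxx.
move: ul' => /= /andP[xt ut].
have sz : size t = (size (rem (f x) t)).+1.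
  rewrite size_rem // prednK // lt0n size_eq0; apply/eqP=> e.
  by rewrite e in fxt.
rewrite sz /=.
have ur : uniq (rem (f x) t) by exact: rem_uniq.
suff : ~~ odd (size (rem (f x) t)) by case: (odd _).
apply: (IH _ ur).
- move=> y; rewrite (rem_filter _ ut) mem_filter => /andP[/= yfx yt].
  have yl : y \in x :: t by rewrite inE yt orbT.
  have := fl' y yl; rewrite inE => /orP[/eqP e|fyt].
    by move: yfx; rewrite -e ffl' ?eqxx // inE yt orbT.
  rewrite mem_filter fyt andbT /=; apply/eqP=> e.
  have : f (f y) = f (f x) by rewrite e.
  rewrite !ffl' ?mem_head // => yx.
  by move: xt; rewrite -yx yt.
- move=> y; rewrite (rem_filter _ ut) mem_filter => /andP[_ yt].
  by apply: ffl'; rewrite inE yt orbT.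
- move=> y; rewrite (rem_filter _ ut) mem_filter => /andP[_ yt].
  by apply: nfix; rewrite inE yt orbT.
- move: szt; rewrite /= sz; lia.
Qed.

Set Implicit Arguments. Unset Strict Implicit.

Lemma iotaSr N : iota 0 N.+1 = rcons (iota 0 N) N.
Proof. by rewrite -addn1 iotaD add0n /= cats1. Qed.

Lemma perm_iotaS N : perm_eq (iota 0 N.+1) (N :: iota 0 N).
Proof. by rewrite iotaSr perm_rcons. Qed.

Lemma simplex_parity N (g : nat -> nat) : (forall j, j <= N -> g j <= N) ->
  odd (count (fun k => perm_eq [seq g j | j <- iota 0 N.+1 & j != k] (iota 0 N))
             (iota 0 N.+1))
  = perm_eq [seq g j | j <- iota 0 N.+1] (iota 0 N.+1).
Proof.
move=> gN.
set I := iota 0 N.+1; set J := iota 0 N; set L := map g I.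
have stepa : forall k, k \in I ->
    perm_eq [seq g j | j <- I & j != k] J = perm_eq L (g k :: J).
  move=> k kI.
  have H : perm_eq L (g k :: [seq g j | j <- I & j != k]).
    rewrite /L -map_cons -(rem_filter _ (iota_uniq 0 N.+1)).
    by apply: perm_map; apply: perm_to_rem.
  by rewrite (permPl H) perm_cons.
rewrite (eq_in_count stepa).
set Q := fun y => perm_eq L (y :: J).
have -> : count (fun k => perm_eq L (g k :: J)) I = count Q L.
  by rewrite /L count_map.
have LN : forall y, y \in L -> y <= N.
  move=> y /mapP[j]; rewrite mem_iota add0n /= => jN ->; apply: gN; lia.
have cJ : forall y, count_mem y J = (y < N).
  by move=> y; rewrite count_uniq_mem ?iota_uniq // mem_iota add0n.
case: (boolP (has Q L)) => [/hasP[y yL Qy]|nh].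
- have eqQ : {in L, Q =1 pred1 y}.
    move=> z zL /=; apply/idP/eqP => [Qz|->//].
    have Hyz : perm_eq (y :: J) (z :: J) by apply: perm_trans Qz; rewrite perm_sym.
    move/permP: Hyz => /(_ (pred1 z)) /=; rewrite eqxx; case: eqP => //= _.
    by move=> /eqP; rewrite eqn_add2r.
  rewrite (eq_in_count eqQ).
  have := Qy => /permP /(_ (pred1 y)) -> /=.
  rewrite eqxx cJ.
  have := LN y yL; rewrite leq_eqVlt => /orP[/eqP yeq|ylt].
  + rewrite yeq ltnn /=; apply/esym.
    by apply: perm_trans Qy _; rewrite yeq perm_sym perm_iotaS.
  + rewrite ylt /=; apply/esym/negP => HL.
    move/permP: HL => /(_ (pred1 y)); move/permP: Qy => /(_ (pred1 y)) -> /=.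
    rewrite eqxx cJ ylt count_uniq_mem ?iota_uniq // mem_iota /=.
    by case: y {yL eqQ} ylt => [|y] /= ylt; lia.
- have -> : count Q L = 0 by apply/eqP; rewrite -leqn0 leqNgt -has_count.
  apply/esym/negP => HL.
  move/hasP: nh; apply; exists N.
    by rewrite (perm_mem HL) mem_iota add0n ltnSn.
  by rewrite /Q; apply: perm_trans HL _; apply: perm_iotaS.
Qed.

Set Implicit Arguments. Unset Strict Implicit.

Fixpoint cells (N m : nat) : seq (seq nat) :=
  if N is N'.+1 then [seq rcons b i | b <- cells N' m, i <- iota 0 m] else [:: [::]].

Lemma mem_cells N m b : (b \in cells N m) = (size b == N) && all (fun x => x < m) b.
Proof.
elim: N b => [|N IH] b /=.
  by rewrite inE; case: b.
case/lastP: b => [|b x].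
  by apply/negP => /allpairsP[[y z] [_ _ /=]] /eqP; rewrite eq_sym -size_eq0 size_rcons.
apply/allpairsP/idP.
- case=> [[y z] [/= yc zi /eqP]]; rewrite eqseq_rcons => /andP[/eqP -> /eqP ->].
  move: yc; rewrite IH size_rcons all_rcons eqSS => /andP[-> ->].
  by move: zi; rewrite mem_iota add0n /= => ->.
- rewrite size_rcons all_rcons eqSS => /andP[sb /andP[xm ab]].
  exists (b, x); split => //=; first by rewrite IH sb.
  by rewrite mem_iota add0n.
Qed.

Lemma uniq_cells N m : uniq (cells N m).
Proof.
elim: N => [//|N IH] /=.
apply: allpairs_uniq => //; first exact: iota_uniq.
by move=> [a b] [c d] _ _ /= /eqP; rewrite eqseq_rcons => /andP[/eqP -> /eqP ->].
Qed.

Definition perms N := permutations (iota 0 N).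
Definition BS N m := [seq (b, p) | b <- cells N m, p <- perms N].
Definition T N m := [seq (bp, k) | bp <- BS N m, k <- iota 0 N.+1].

Lemma mem_perms N p : (p \in perms N) = perm_eq p (iota 0 N).
Proof. by rewrite /perms mem_permutations. Qed.

Lemma uniq_BS N m : uniq (BS N m).
Proof.
apply: allpairs_uniq; [exact: uniq_cells|exact: permutations_uniq|].
by move=> [a b] [c d] _ _ /= [-> ->].
Qed.

Lemma uniq_T N m : uniq (T N m).
Proof.
apply: allpairs_uniq; [exact: uniq_BS|exact: iota_uniq|].
by move=> [a b] [c d] _ _ /= [-> ->].
Qed.

Lemma mem_BS N m b p : ((b, p) \in BS N m) = (b \in cells N m) && (p \in perms N).
Proof.
apply/allpairsP/andP.
- by case=> [[y z] [/= h1 h2 [-> ->]]].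
- by case=> h1 h2; exists (b, p).
Qed.

Lemma mem_T N m b p k :
  (((b, p), k) \in T N m) = [&& b \in cells N m, p \in perms N & k <= N].
Proof.
apply/allpairsP/and3P.
- move=> [[[y z] w] [h1 h2 e]]; move: h1 h2; rewrite mem_iota; case: e => -> -> ->.
  rewrite mem_BS => /andP[-> ->] h2; split => //; move: h2; rewrite add0n /=; lia.
- case=> h1 h2 h3; exists ((b, p), k); split => //.
    by rewrite mem_BS h1 h2.
  rewrite mem_iota add0n /=; lia.
Qed.

Lemma permsP N p : p \in perms N ->
  [/\ size p = N, uniq p & forall q, (q \in p) = (q < N)].
Proof.
rewrite mem_perms => H; split.
- by rewrite (perm_size H) size_iota.
- by rewrite (perm_uniq H) iota_uniq.
- by move=> q; rewrite (perm_mem H) mem_iota add0n.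
Qed.

Lemma nth_perm_lt N p i : p \in perms N -> i < N -> nth 0 p i < N.
Proof.
case/permsP => sp up mp iN; rewrite -mp; apply: mem_nth; by rewrite sp.
Qed.

Lemma nth_eq_index (p : seq nat) i q : uniq p -> i < size p -> q \in p ->
  (nth 0 p i == q) = (i == index q p).
Proof.
move=> up ip qp; apply/eqP/eqP => [<-|->].
  by rewrite index_uniq.
by rewrite nth_index.
Qed.

Definition vert N (b p : seq nat) j := mkseq (fun i => nth 0 b i + (nth 0 p i < j)) N.

Definition grid N m (g : seq nat) := (size g == N) && all (fun x => x <= m) g.

Lemma nth_vert N b p j i : i < N -> nth 0 (vert N b p j) i = nth 0 b i + (nth 0 p i < j).
Proof. by move=> iN; rewrite nth_mkseq. Qed.

Lemma all_mkseq (P : pred nat) f N : all P (mkseq f N) = all (fun i => P (f i)) (iota 0 N).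
Proof. by rewrite /mkseq all_map. Qed.

Lemma cellsP N m b : b \in cells N m -> size b = N /\ forall i, i < N -> nth 0 b i < m.
Proof.
rewrite mem_cells => /andP[/eqP sb /allP ab]; split => // i iN.
by apply: ab; apply: mem_nth; rewrite sb.
Qed.

Lemma cells_mkseq N m f : (forall i, i < N -> f i < m) -> mkseq f N \in cells N m.
Proof.
move=> H; rewrite mem_cells size_mkseq eqxx /= all_mkseq.
by apply/allP => i; rewrite mem_iota add0n => /H.
Qed.

Lemma vert_grid N m b p j : b \in cells N m -> grid N m (vert N b p j).
Proof.
case/cellsP => sb bm; rewrite /grid size_mkseq eqxx /= all_mkseq.
apply/allP => i; rewrite mem_iota add0n /= => iN.
by have := bm i iN; case: (_ < j); rewrite ?addn1 ?addn0 // => /ltnW.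
Qed.

Set Implicit Arguments. Unset Strict Implicit.

Lemma perm_bij (t u : nat -> nat) N p :
  (forall q, q < N -> t q < N) -> (forall q, q < N -> u q < N) ->
  (forall q, q < N -> u (t q) = q) -> (forall q, q < N -> t (u q) = q) ->
  perm_eq p (iota 0 N) -> perm_eq (map t p) (iota 0 N).
Proof.
move=> tN uN ut tu pP.
apply: perm_trans (perm_map t pP) _.
apply: uniq_perm.
- rewrite map_inj_in_uniq ?iota_uniq //.
  move=> x y; rewrite !mem_iota /= !add0n => xN yN txy.
  by rewrite -(ut x xN) txy ut.
- exact: iota_uniq.
move=> x; rewrite mem_iota add0n /=.
apply/mapP/idP.
- by case=> y; rewrite mem_iota add0n /= => yN ->; apply: tN.
- move=> xN; exists (u x); first by rewrite mem_iota add0n /= uN.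
  by rewrite tu.
Qed.

Definition t0 N q := if q == 0 then N.-1 else q.-1.
Definition tN N q := if q == N.-1 then 0 else q.+1.
Definition tk k q := if q == k.-1 then k else if q == k then k.-1 else q.

Lemma perm_t0 N p : 0 < N -> p \in perms N -> map (t0 N) p \in perms N.
Proof.
move=> N0; rewrite !mem_perms; apply: (perm_bij (u := tN N)); rewrite /t0 /tN => q qN.
- case: eqP => ?; lia.
- case: eqP => ?; lia.
- case: (q =P 0) => [->|q0]; first by rewrite eqxx.
  case: eqP => ?; lia.
- case: (q =P N.-1) => [->|q0]; first by rewrite eqxx.
  by [].
Qed.

Lemma perm_tN N p : 0 < N -> p \in perms N -> map (tN N) p \in perms N.
Proof.
move=> N0; rewrite !mem_perms; apply: (perm_bij (u := t0 N)); rewrite /t0 /tN => q qN.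
- case: eqP => ?; lia.
- case: eqP => ?; lia.
- case: (q =P N.-1) => [->|q0]; first by rewrite eqxx.
  by [].
- case: (q =P 0) => [->|q0]; first by rewrite eqxx.
  case: eqP => ?; lia.
Qed.

Lemma tkK k q : 0 < k -> tk k (tk k q) = q.
Proof.
move=> k0; rewrite /tk.
case: (q =P k.-1) => [->|h1]; first by rewrite (_ : (k == k.-1) = false) ?eqxx //; apply/eqP; lia.
case: (q =P k) => [->|h2]; first by rewrite eqxx.
by move/eqP/negbTE: h1 => ->; move/eqP/negbTE: h2 => ->.
Qed.

Lemma perm_tk N k p : 0 < k < N -> p \in perms N -> map (tk k) p \in perms N.
Proof.
move=> kN; rewrite !mem_perms; apply: (perm_bij (u := tk k)) => q qN.
- rewrite /tk; case: eqP => _; [lia|case: eqP => ?; lia].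
- rewrite /tk; case: eqP => _; [lia|case: eqP => ?; lia].
- by apply: tkK; lia.
- by apply: tkK; lia.
Qed.

Definition pivot N m (x : (seq nat * seq nat) * nat) :=
  let b := x.1.1 in let p := x.1.2 in let k := x.2 in
  if k == 0 then
    if (nth 0 b (index 0 p)).+1 < m then
      ((mkseq (fun i => nth 0 b i + (i == index 0 p)) N, map (t0 N) p), N)
    else x
  else if k == N then
    if 0 < nth 0 b (index N.-1 p) then
      ((mkseq (fun i => nth 0 b i - (i == index N.-1 p)) N, map (tN N) p), 0)
    else x
  else ((b, map (tk k) p), k).

Lemma mkseq_ext N (f g : nat -> nat) : (forall i, i < N -> f i = g i) -> mkseq f N = mkseq g N.
Proof.
move=> H; apply/eq_in_map => i; rewrite mem_iota add0n /=; exact: H.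
Qed.

Lemma pivot_T N m x : 0 < N -> x \in T N m -> pivot N m x \in T N m.
Proof.
move=> N0; case: x => [[b p] k]; rewrite mem_T => /and3P[bc pp kN].
have [sb bm] := cellsP bc.
have [sp up mp] := permsP pp.
rewrite /pivot /=.
case: (k =P 0) => [k0|k0].
  case: ifP => h; last by rewrite mem_T bc pp kN.
  rewrite mem_T leqnn andbT perm_t0 // andbT.
  apply: cells_mkseq => i iN.
  case: (i =P index 0 p) => [->|_]; first by rewrite addn1.
  by rewrite addn0 bm.
case: (k =P N) => [kN'|kN'].
  case: ifP => h; last by rewrite mem_T bc pp kN.
  rewrite mem_T leq0n andbT perm_tN // andbT.
  apply: cells_mkseq => i iN.
  have := bm i iN; lia.
rewrite mem_T bc perm_tk //; lia.
Qed.

Lemma index_lt N p q : p \in perms N -> q < N -> index q p < N.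
Proof. by case/permsP => sp up mp qN; rewrite -{1}sp index_mem mp. Qed.

Lemma nth_index_perm N p q : p \in perms N -> q < N -> nth 0 p (index q p) = q.
Proof. by case/permsP => sp up mp qN; rewrite nth_index // mp. Qed.

Lemma index_nth_perm N p i : p \in perms N -> i < N -> index (nth 0 p i) p = i.
Proof. by case/permsP => sp up mp iN; rewrite index_uniq // sp. Qed.

Lemma pivot_invol N m x : 0 < N -> x \in T N m -> pivot N m (pivot N m x) = x.
Proof.
move=> N0; case: x => [[b p] k]; rewrite mem_T => /and3P[bc pp kN].
have [sb bm] := cellsP bc.
have [sp up mp] := permsP pp.
have i0N : index 0 p < N by apply: (index_lt pp).
have i1N : index N.-1 p < N by apply: (index_lt pp); lia.
case: (k =P 0) => [k0|k0].
  case h: ((nth 0 b (index 0 p)).+1 < m); last by rewrite /pivot /= k0 eqxx h /= ?eqxx ?h.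
  have -> : pivot N m (b, p, k) = ((mkseq (fun i => nth 0 b i + (i == index 0 p)) N, map (t0 N) p), N).
    by rewrite /pivot /= k0 eqxx h.
  rewrite /pivot /= (_ : (N == 0) = false); last by apply/eqP; lia.
  rewrite eqxx.
  have e1 : index N.-1 (map (t0 N) p) = index 0 p.
    have <- : t0 N (nth 0 p (index 0 p)) = N.-1.
      by rewrite (nth_index_perm pp) // /t0 eqxx.
    rewrite -(nth_map 0 0 (t0 N)); last by rewrite sp.
    rewrite index_uniq ?size_map ?sp //.
    by have := perm_t0 N0 pp; rewrite mem_perms => /perm_uniq ->; exact: iota_uniq.
  rewrite e1 nth_mkseq // eqxx addn1 /=.
  congr (_, _, _).
  - rewrite -{2}(mkseq_nth 0 b) sb; apply: mkseq_ext => i iN.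
    by rewrite nth_mkseq // addnK.
  - rewrite -map_comp -{2}(map_id p); apply/eq_in_map => q qp /=.
    have qN : q < N by rewrite -mp.
    rewrite /t0 /tN; case: (q =P 0) => [->|q0]; first by rewrite eqxx.
    case: eqP => ?; lia.
  - by rewrite k0.
case: (k =P N) => [kN'|kN'].
  have kn0 : (k == 0) = false by apply/eqP.
  case h: (0 < nth 0 b (index N.-1 p)); last by rewrite /pivot /= kn0 kN' eqxx h /= -kN' ?kn0 ?eqxx ?kN' ?h.
  have -> : pivot N m (b, p, k) = ((mkseq (fun i => nth 0 b i - (i == index N.-1 p)) N, map (tN N) p), 0).
    by rewrite /pivot /= kn0 kN' eqxx h.
  rewrite /pivot /=.
  have e1 : index 0 (map (tN N) p) = index N.-1 p.
    have <- : tN N (nth 0 p (index N.-1 p)) = 0.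
      by rewrite (nth_index_perm pp) ?/tN ?eqxx //; lia.
    rewrite -(nth_map 0 0 (tN N)); last by rewrite sp.
    rewrite index_uniq ?size_map ?sp //.
    by have := perm_tN N0 pp; rewrite mem_perms => /perm_uniq ->; exact: iota_uniq.
  rewrite e1 nth_mkseq // eqxx.
  have bm1 := bm _ i1N.
  rewrite ifT; last by lia.
  congr (_, _, _).
  - rewrite -{2}(mkseq_nth 0 b) sb; apply: mkseq_ext => i iN.
    rewrite nth_mkseq //; case: (i =P index N.-1 p) => [->|_]; last by rewrite subn0 addn0.
    lia.
  - rewrite -map_comp -{2}(map_id p); apply/eq_in_map => q qp /=.
    have qN : q < N by rewrite -mp.
    rewrite /t0 /tN; case: (q =P N.-1) => [->|q0]; first by rewrite eqxx.
    by [].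
  - by rewrite kN'.
have kn0 : (k == 0) = false by apply/eqP.
have knN : (k == N) = false by apply/eqP.
rewrite /pivot /= kn0 knN /= kn0 knN.
rewrite -map_comp -{2}(map_id p).
congr (_, _, _); apply/eq_in_map => q _ /=; apply: tkK; lia.
Qed.

Set Implicit Arguments. Unset Strict Implicit.

Definition door (lab : seq nat -> nat) N (x : (seq nat * seq nat) * nat) :=
  perm_eq [seq lab (vert N x.1.1 x.1.2 j) | j <- iota 0 N.+1 & j != x.2] (iota 0 N).
Definition fl (lab : seq nat -> nat) N (bp : seq nat * seq nat) :=
  perm_eq [seq lab (vert N bp.1 bp.2 j) | j <- iota 0 N.+1] (iota 0 N.+1).

Lemma facet0 (f : nat -> nat) N :
  [seq f j | j <- iota 0 N.+1 & j != 0] = [seq f j.+1 | j <- iota 0 N].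
Proof.
rewrite /= (_ : [seq j <- iota 1 N | j != 0] = iota 1 N).
  by rewrite (iotaDl 1 0) -map_comp; apply/eq_map => j /=; rewrite add1n.
by apply/all_filterP/allP => j; rewrite mem_iota; lia.
Qed.

Lemma facetN (f : nat -> nat) N :
  [seq f j | j <- iota 0 N.+1 & j != N] = [seq f j | j <- iota 0 N].
Proof.
rewrite iotaSr filter_rcons eqxx /=.
congr map; apply/all_filterP/allP => j; rewrite mem_iota; lia.
Qed.

Lemma vert_mid N b p k j : 0 < k < N -> size p = N -> j != k ->
  vert N b (map (tk k) p) j = vert N b p j.
Proof.
move=> kN sp jk; apply: mkseq_ext => i iN.
rewrite (nth_map 0) ?sp //; congr addn; rewrite /tk.
congr nat_of_bool; case: eqP => ?; [|case: eqP => ?]; move: jk => /eqP; lia.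
Qed.

Lemma vert_piv0 N b p j : 0 < N -> p \in perms N -> j < N ->
  vert N (mkseq (fun i => nth 0 b i + (i == index 0 p)) N) (map (t0 N) p) j
  = vert N b p j.+1.
Proof.
move=> N0 pp jN; have [sp up mp] := permsP pp.
apply: mkseq_ext => i iN.
rewrite nth_mkseq // (nth_map 0) ?sp // /t0.
have e : (nth 0 p i == 0) = (i == index 0 p) by apply: nth_eq_index; rewrite ?sp ?mp.
have hn : nth 0 p i != 0 -> (nth 0 p i).-1 < j = (nth 0 p i < j.+1) by move=> ?; lia.
rewrite e; case: (i =P index 0 p) => [ie|ine].
  rewrite ie (nth_index_perm pp) //; lia.
have : nth 0 p i != 0 by rewrite e; apply/eqP.
move/hn => ->; lia.
Qed.

Lemma vert_pivN N b p j : 0 < N -> p \in perms N -> j < N ->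
  0 < nth 0 b (index N.-1 p) ->
  vert N (mkseq (fun i => nth 0 b i - (i == index N.-1 p)) N) (map (tN N) p) j.+1
  = vert N b p j.
Proof.
move=> N0 pp jN bpos; have [sp up mp] := permsP pp.
apply: mkseq_ext => i iN.
rewrite nth_mkseq // (nth_map 0) ?sp // /tN.
have e : (nth 0 p i == N.-1) = (i == index N.-1 p).
  by apply: nth_eq_index; rewrite ?sp ?mp //; lia.
rewrite e; case: (i =P index N.-1 p) => [ie|ine].
  rewrite ie (nth_index_perm pp) //; [|lia].
  rewrite -ie in bpos *; lia.
have : nth 0 p i != N.-1 by rewrite e; apply/eqP.
have := nth_perm_lt pp iN; lia.
Qed.

Lemma door_pivot lab N m x : 0 < N -> x \in T N m -> door lab N (pivot N m x) = door lab N x.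
Proof.
move=> N0; case: x => [[b p] k]; rewrite mem_T => /and3P[bc pp kN].
have [sp up mp] := permsP pp.
rewrite /door /pivot; cbn [fst snd].
case: (k =P 0) => [k0|k0].
  case: ifP => h //; cbn [fst snd].
  rewrite k0 facetN facet0; congr perm_eq; apply/eq_in_map => j.
  rewrite mem_iota => /andP[_ jN]; rewrite vert_piv0 //.
case: (k =P N) => [kN'|kN'].
  case: ifP => h //; cbn [fst snd].
  rewrite kN' facetN facet0; congr perm_eq; apply/eq_in_map => j.
  rewrite mem_iota => /andP[_ jN]; rewrite vert_pivN //.
congr perm_eq; apply/eq_in_map => j; rewrite mem_filter => /andP[jk _].
rewrite vert_mid //; lia.
Qed.

Lemma pivot_fixed N m x : 0 < N -> x \in T N m -> pivot N m x = x ->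
  (x.2 = 0 /\ ~~ ((nth 0 x.1.1 (index 0 x.1.2)).+1 < m)) \/
  (x.2 = N /\ nth 0 x.1.1 (index N.-1 x.1.2) = 0).
Proof.
move=> N0; case: x => [[b p] k]; rewrite mem_T => /and3P[bc pp kN].
have [sp up mp] := permsP pp.
rewrite /pivot /=.
case: (k =P 0) => [k0|k0].
  case: ifP => h; last by left.
  by move=> [_ _]; lia.
case: (k =P N) => [kN'|kN'].
  case: ifP => h; last by right; split => //; lia.
  by move=> [_ _]; lia.
move=> [e].
have km : k.-1 \in p by rewrite mp; lia.
have := congr1 (nth 0 ^~ (index k.-1 p)) e.
rewrite (nth_map 0); last by rewrite index_mem.
rewrite nth_index // /tk eqxx; lia.
Qed.

Set Implicit Arguments. Unset Strict Implicit.

Definition labhyp N m (lab : seq nat -> nat) :=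
 [/\ forall g, grid N m g -> lab g <= N,
     forall g i, grid N m g -> i < N -> nth 0 g i = 0 -> lab g != i &
     forall g i, grid N m g -> i < N -> nth 0 g i = m -> lab g <= i].

Lemma bdryN N m lab b p : 0 < N -> labhyp N m lab -> ((b, p), N) \in T N m ->
  nth 0 b (index N.-1 p) = 0 -> door lab N ((b, p), N) -> False.
Proof.
move=> N0 [H0 H1 H2]; rewrite mem_T => /and3P[bc pp _] b0.
rewrite /door /= facetN => /perm_mem HF.
have i1N : index N.-1 p < N by apply: (index_lt pp); lia.
have : index N.-1 p \in iota 0 N by rewrite mem_iota.
rewrite -HF => /mapP[j]; rewrite mem_iota add0n /= => jN.
move/esym/eqP; apply/negP; apply: H1 => //; first exact: vert_grid.
rewrite nth_vert // b0 (nth_index_perm pp); lia.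
Qed.

Lemma bdry0 N m lab b p : 0 < N -> labhyp N m lab -> ((b, p), 0) \in T N m ->
  ~~ ((nth 0 b (index 0 p)).+1 < m) -> door lab N ((b, p), 0) -> index 0 p = N.-1.
Proof.
move=> N0 [H0 H1 H2]; rewrite mem_T => /and3P[bc pp _] bm.
have [sb bmm] := cellsP bc.
rewrite /door /= facet0 => /perm_mem HF.
have i0N : index 0 p < N by apply: (index_lt pp).
have : N.-1 \in iota 0 N by rewrite mem_iota; lia.
rewrite -HF => /mapP[j]; rewrite mem_iota add0n /= => jN e.
have := H2 (vert N b p j.+1) (index 0 p) (vert_grid _ _ bc) i0N.
rewrite nth_vert // (nth_index_perm pp) //.
have := bmm _ i0N; move: bm; rewrite -e; lia.
Qed.

Definition E m (y : seq nat * seq nat) :=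
  ((rcons y.1 m.-1, rcons (map succn y.2) 0), 0).

Lemma E_inj m : injective (E m).
Proof.
move=> [a b] [c d] H; rewrite /E /= in H; case: H => e1 e2.
rewrite (@rcons_injl nat _ a c e1).
by rewrite (inj_map succn_inj (@rcons_injl nat _ _ _ e2)).
Qed.

Lemma perm_rcons_succ N p : perm_eq (rcons (map succn p) 0) (iota 0 N.+1) =
  perm_eq p (iota 0 N).
Proof.
rewrite perm_rcons /= perm_cons (iotaDl 1 0).
have -> : map succn p = map (addn 1) p by apply: eq_map => x; rewrite add1n.
apply/idP/idP => H; last exact: perm_map.
apply: (@perm_map_inj _ _ (addn 1)) H; exact: addnI.
Qed.

Set Implicit Arguments. Unset Strict Implicit.

Lemma vert_E N m b p j : 0 < m -> size b = N -> size p = N ->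
  vert N.+1 (rcons b m.-1) (rcons (map succn p) 0) j.+1 = rcons (vert N b p j) m.
Proof.
move=> m0 sb sp; rewrite /vert mkseqS; congr rcons.
  apply: mkseq_ext => i iN.
  rewrite !nth_rcons sb size_map sp iN (nth_map 0) ?sp //.
rewrite !nth_rcons sb size_map sp ltnn eqxx /=; lia.
Qed.

Lemma E_T N m y : 0 < m -> y \in BS N m -> E m y \in T N.+1 m.
Proof.
case: y => [b p] m0; rewrite mem_BS => /andP[bc pp].
rewrite /E /= mem_T leq0n andbT mem_perms perm_rcons_succ -mem_perms pp andbT.
move: bc; rewrite !mem_cells size_rcons all_rcons eqSS => /andP[-> ->] /=.
by rewrite andbT; lia.
Qed.

Lemma index_E N p : size p = N -> index 0 (rcons (map succn p) 0) = N.
Proof.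
move=> sp; rewrite -cats1 index_cat.
have -> : (0 \in map succn p) = false by apply/negP => /mapP[x _].
by rewrite size_map sp /= addn0.
Qed.

Lemma E_fixed N m y : 0 < m -> y \in BS N m -> pivot N.+1 m (E m y) = E m y.
Proof.
case: y => [b p] m0; rewrite mem_BS => /andP[bc pp].
have [sb _] := cellsP bc; have [sp _ _] := permsP pp.
rewrite /pivot /E; cbn [fst snd]; rewrite eqxx (index_E sp) nth_rcons sb ltnn eqxx.
by rewrite ifF //; apply/negbTE; rewrite -leqNgt; lia.
Qed.

Lemma E_door N m lab y : 0 < m -> y \in BS N m ->
  door lab N.+1 (E m y) = fl (fun g => lab (rcons g m)) N y.
Proof.
case: y => [b p] m0; rewrite mem_BS => /andP[bc pp].
have [sb _] := cellsP bc; have [sp _ _] := permsP pp.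
rewrite /door /fl /E; cbn [fst snd]; rewrite facet0.
congr perm_eq; apply: eq_map => j; by rewrite vert_E.
Qed.

Lemma nth_rcons_lt (g : seq nat) x i : i < size g -> nth 0 (rcons g x) i = nth 0 g i.
Proof. by move=> h; rewrite nth_rcons h. Qed.

Lemma labhyp_face N m lab : labhyp N.+1 m lab -> labhyp N m (fun g => lab (rcons g m)).
Proof.
case=> H0 H1 H2.
have gr : forall g, grid N m g -> grid N.+1 m (rcons g m).
  by move=> g; rewrite /grid size_rcons all_rcons eqSS leqnn.
have gs : forall g, grid N m g -> size g = N by move=> g /andP[/eqP].
split.
- move=> g Hg; apply: H2 => //; first exact: gr.
  by rewrite nth_rcons gs // ltnn eqxx.
- move=> g i Hg iN e; apply: (H1 _ _ (gr _ Hg)); [lia|by rewrite nth_rcons_lt ?gs //; lia].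
- move=> g i Hg iN e; apply: (H2 _ _ (gr _ Hg)); [lia|by rewrite nth_rcons_lt ?gs //; lia].
Qed.

Set Implicit Arguments. Unset Strict Implicit.

Lemma rcons_take_last (s : seq nat) N : size s = N.+1 -> s = rcons (take N s) (nth 0 s N).
Proof.
move=> ss; rewrite -cats1 -{1}(cat_take_drop N s); congr cat.
rewrite (drop_nth 0) ?ss // drop_oversize ?ss //.
Qed.

Lemma E_pre N m lab x : 0 < m -> labhyp N.+1 m lab -> x \in T N.+1 m ->
  door lab N.+1 x -> pivot N.+1 m x = x -> exists2 y, y \in BS N m & x = E m y.
Proof.
move=> m0 Hl xT dx px.
have [[k0 bm]|[kN b0]] := pivot_fixed (ltn0Sn N) xT px; last first.
  case: x xT dx px kN b0 => [[b p] k] /= xT dx px kN b0.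
  by rewrite kN in xT dx; case: (bdryN (ltn0Sn N) Hl xT b0 dx).
case: x xT dx px k0 bm => [[b p] k] /= xT dx px k0 bm.
rewrite k0 in xT dx.
have i0 := bdry0 (ltn0Sn N) Hl xT bm dx.
move: (xT); rewrite mem_T => /and3P[bc pp _].
have [sb bmm] := cellsP bc; have [sp up mp] := permsP pp.
rewrite /= in i0.
have eb : b = rcons (take N b) m.-1.
  rewrite {1}(rcons_take_last sb); congr rcons.
  have := bmm N (ltnSn N); move: bm; rewrite i0; lia.
have ep0 : p = rcons (take N p) 0.
  rewrite {1}(rcons_take_last sp); congr rcons.
  by rewrite -{1}i0 (nth_index_perm pp).
have nz : 0 \notin take N p.
  by move: up; rewrite {1}ep0 rcons_uniq => /andP[->].
have ep : take N p = map succn (map predn (take N p)).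
  rewrite -map_comp map_id_in // => q qt /=; apply: prednK; rewrite lt0n.
  by apply/eqP => e; move: nz; rewrite -e qt.
exists (take N b, map predn (take N p)).
  rewrite mem_BS; apply/andP; split.
    rewrite mem_cells size_take sb ltnSn eqxx /=.
    apply/allP => q /mem_take qb; move: bc; rewrite mem_cells => /andP[_ /allP]; exact.
  by rewrite mem_perms -perm_rcons_succ -ep -ep0 -mem_perms.
by rewrite /E /= -ep -ep0 -eb k0.
Qed.

Lemma count_split (A : Type) (a b : pred A) s :
  count a s = count (fun x => a x && b x) s + count (fun x => a x && ~~ b x) s.
Proof. by elim: s => //= x s ->; case: (a x); case: (b x) => /=; lia. Qed.

Lemma count_door_fixed N m lab : 0 < N ->
  odd (count (door lab N) (T N m)) =
  odd (count (fun x => door lab N x && (pivot N m x == x)) (T N m)).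
Proof.
move=> N0; rewrite (count_split _ (fun x => pivot N m x == x)) oddD.
have -> : odd (count (fun x => door lab N x && ~~ (pivot N m x == x)) (T N m)) = false.
  apply/negbTE; apply: count_invol; first exact: uniq_T.
  - by move=> x; apply: pivot_T.
  - by move=> x; apply: pivot_invol.
  - by move=> x; apply: door_pivot.
by rewrite addbF.
Qed.

Lemma count_fixed_E N m lab : 0 < m -> labhyp N.+1 m lab ->
  count (fun x => door lab N.+1 x && (pivot N.+1 m x == x)) (T N.+1 m)
  = count (fl (fun g => lab (rcons g m)) N) (BS N m).
Proof.
move=> m0 Hl.
set P := fun x => door lab N.+1 x && (pivot N.+1 m x == x).
have -> : count (fl (fun g => lab (rcons g m)) N) (BS N m) = count P (map (E m) (BS N m)).
  rewrite count_map; apply: eq_in_count => y yB.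
  by rewrite /preim /P /= E_door // E_fixed // eqxx andbT.
rewrite -!size_filter; apply: perm_size; apply: uniq_perm.
- by rewrite filter_uniq // uniq_T.
- by rewrite filter_uniq // map_inj_uniq ?uniq_BS //; apply: E_inj.
move=> x; rewrite !mem_filter; apply/andP/andP => [[Px xT]|[Px /mapP[y yB xe]]].
  split => //; move: Px; rewrite /P => /andP[dx /eqP px].
  by have [y yB ->] := E_pre m0 Hl xT dx px; apply: map_f.
by rewrite xe in Px *; split; [exact: Px | exact: (E_T m0 yB)].
Qed.

Lemma odd_sumn s : odd (sumn s) = odd (count odd s).
Proof. by elim: s => //= x s IH; rewrite oddD IH; case: (odd x). Qed.

Lemma count_door_fl N m lab : labhyp N m lab ->
  odd (count (door lab N) (T N m)) = odd (count (fl lab N) (BS N m)).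
Proof.
case=> H0 _ _.
have -> : count (door lab N) (T N m) =
   sumn [seq count (fun k => door lab N (bp, k)) (iota 0 N.+1) | bp <- BS N m].
  rewrite /T; elim: (BS N m) => [//|bp s IH].
  by rewrite allpairs_cons count_cat count_map IH.
rewrite odd_sumn count_map; congr odd; apply: eq_in_count => -[b p].
rewrite mem_BS => /andP[bc _]; rewrite /preim /=.
rewrite /door /fl /=.
apply: (simplex_parity (g := fun j => lab (vert N b p j))) => j _.
by apply: H0; apply: vert_grid.
Qed.

Theorem sperner_odd N m lab : 0 < m -> labhyp N m lab -> odd (count (fl lab N) (BS N m)).
Proof.
move=> m0; elim: N lab => [|N IH] lab Hl.
  case: Hl => H0 _ _.
  have : lab [::] <= 0 by apply: H0.
  rewrite leqn0 => /eqP l0.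
  by rewrite /BS /= /fl /= /vert /= l0.
rewrite -count_door_fl // count_door_fixed // count_fixed_E //.
apply: IH; exact: labhyp_face.
Qed.

Theorem sperner N m lab : 0 < m -> labhyp N m lab ->
  exists b p, [/\ b \in cells N m, p \in perms N &
    forall l, l <= N -> exists2 j, j <= N & lab (vert N b p j) = l].
Proof.
move=> m0 Hl; have := sperner_odd m0 Hl.
case: (boolP (has (fl lab N) (BS N m))) => [/hasP[[b p] bpB flp] _|].
  move: bpB; rewrite mem_BS => /andP[bc pp].
  exists b, p; split => // l lN.
  have : l \in iota 0 N.+1 by rewrite mem_iota.
  rewrite -(perm_mem flp) => /mapP[j]; rewrite mem_iota add0n ltnS => jN ->.
  by exists j.
by rewrite has_count -leqNgt leqn0 => /eqP ->.
Qed.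

Set Implicit Arguments. Unset Strict Implicit.
Open Scope R_scope.

Definition inbox N (x : nat -> R) := forall i, (i < N)%N -> 0 <= x i <= 1.
Definition close N d (x y : nat -> R) := forall i, (i < N)%N -> Rabs (x i - y i) < d.

Unset Implicit Arguments.
Fixpoint toT (n : nat) (x : nat -> R) : Compactness.Tn n R :=
  match n with O => tt | S n' => (x O, toT n' (fun i => x (S i))) end.
Fixpoint ofT (n : nat) : Compactness.Tn n R -> nat -> R :=
  match n return Compactness.Tn n R -> nat -> R with
  | O => fun _ _ => 0
  | S n' => fun (t : R * Compactness.Tn n' R) i =>
      match i with O => fst t | S i' => ofT n' (snd t) i' end
  end.

Set Implicit Arguments.
Lemma ofT_toT n x i : (i < n)%N -> ofT n (toT n x) i = x i.
Proof.
elim: n x i => [|n IH] x [|i] //= h.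
by rewrite IH.
Qed.

Lemma bounded_iff n t :
  Compactness.bounded_n n (toT n (fun _ => 0)) (toT n (fun _ => 1)) t <-> inbox n (ofT n t).
Proof.
elim: n t => [|n IH] /= t; first by split => // _ i.
case: t => a t /=; rewrite IH; split.
- by move=> [h1 h2] [|i] //= h; apply: h2.
- move=> h; split; first exact: (h 0%N).
  by move=> i hi; apply: (h i.+1).
Qed.

Lemma close_iff n d x t :
  Compactness.close_n n d x t <-> close n d (ofT n x) (ofT n t).
Proof.
elim: n x t => [|n IH] /= x t; first by split => // _ i.
case: x => a x; case: t => b t /=; rewrite IH; split.
- by move=> [h1 h2] [|i] //= h; apply: h2.
- move=> h; split; first exact: (h 0%N).
  by move=> i hi; apply: (h i.+1).
Qed.

Lemma inbox_ext N x y : (forall i, (i < N)%N -> x i = y i) -> inbox N x -> inbox N y.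
Proof. by move=> e h i hi; rewrite -e //; apply: h. Qed.

Lemma compact_gauge N (g : (nat -> R) -> R) : (forall x, 0 < g x) ->
  exists2 d, 0 < d & forall y, inbox N y ->
    ~ ~ exists t, inbox N t /\ close N (g t) y t /\ d <= g t.
Proof.
move=> gp.
have [[d dp] Hd] := Compactness.compactness_value N (toT N (fun _ => 0)) (toT N (fun _ => 1))
   (fun t => mkposreal (g (ofT N t)) (gp _)).
exists d => // y yb Hn.
apply: (Hd (toT N y)).
  apply/bounded_iff; apply: inbox_ext yb => i hi; by rewrite ofT_toT.
move=> [t [tb [tc td]]]; apply: Hn; exists (ofT N t); split.
  by apply/bounded_iff.
split => //.
move/close_iff: tc => tc i hi; rewrite -(ofT_toT y hi); exact: tc.
Qed.

Set Implicit Arguments. Unset Strict Implicit.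
Open Scope R_scope.

Definition contF N (F : (nat -> R) -> nat -> R) :=
  forall x, inbox N x -> forall eps, 0 < eps -> exists2 d, 0 < d &
    forall y, inbox N y -> close N d x y ->
      forall i, (i < N)%N -> Rabs (F x i - F y i) < eps.

Lemma unif_cont N F : contF N F -> forall eps, 0 < eps -> exists2 d, 0 < d &
  forall y z, inbox N y -> inbox N z -> close N d y z ->
    forall i, (i < N)%N -> Rabs (F y i - F z i) < eps.
Proof.
move=> Fc eps ep.
pose P t d := 0 < d /\ (inbox N t -> forall y, inbox N y -> close N d t y ->
    forall i, (i < N)%N -> Rabs (F t i - F y i) < eps / 2).
have Pex : forall t, exists d, P t d.
  move=> t; case: (classic (inbox N t)) => tb.
    have [d dp Hd] := Fc t tb (eps / 2) ltac:(lra).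
    by exists d; split => // _.
  by exists 1; split => //; lra.
pose g t := epsilon (inhabits 1) (P t).
have gP : forall t, P t (g t) by move=> t; apply: epsilon_spec.
have [d dp Hd] := @compact_gauge N (fun t => g t / 2) ltac:(move=> t; have := (gP t).1; lra).
exists d => // y z yb zb yz i iN.
apply: NNPP => Hn; apply: (Hd y yb) => -[t [tb [ty dt]]].
apply: Hn.
have [gp Hg] := gP t.
have cty : close N (g t) t y.
  by move=> k kN; rewrite Rabs_minus_sym; have := ty k kN; lra.
have ctz : close N (g t) t z.
  move=> k kN; have := ty k kN; have := yz k kN.
  have := Rabs_triang (t k - y k) (y k - z k).
  rewrite (_ : t k - y k + (y k - z k) = t k - z k); last ring.
  rewrite (Rabs_minus_sym (t k) (y k)); lra.
have h1 := Hg tb y yb cty i iN; have h2 := Hg tb z zb ctz i iN.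
have := Rabs_triang (F y i - F t i) (F t i - F z i).
rewrite (_ : F y i - F t i + (F t i - F z i) = F y i - F z i); last ring.
rewrite (Rabs_minus_sym (F y i) (F t i)); lra.
Qed.

Unset Implicit Arguments. Unset Strict Implicit.
Open Scope R_scope.

Lemma grid_nth N m g i : grid N m g -> (i < N)%N -> (nth 0%N g i <= m)%N.
Proof.
case/andP => /eqP sg /allP ag iN; apply: ag; apply: mem_nth; by rewrite sg.
Qed.

Lemma INR_div_box a m : (0 < m)%N -> (a <= m)%N -> 0 <= INR a / INR m <= 1.
Proof.
move=> m0 am.
have mp : 0 < INR m by apply: lt_0_INR; apply/ltP.
have : INR a <= INR m by apply: le_INR; apply/leP.
have := pos_INR a.
split; first by apply: Rmult_le_pos => //; apply: Rlt_le; apply: Rinv_0_lt_compat.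
by apply: (Rmult_le_reg_r (INR m)) => //; rewrite /Rdiv Rmult_assoc Rinv_l; lra.
Qed.

Lemma approx_fp N F : (forall x, inbox N x -> inbox N (F x)) -> contF N F ->
  forall eps, 0 < eps -> exists x, inbox N x /\
    forall i, (i < N)%N -> Rabs (F x i - x i) < eps.
Proof.
move=> FB Fc eps ep.
have [d dp Hd] := unif_cont Fc (eps:=eps / 2) ltac:(lra).
set c := Rmin d (eps / 2).
have cp : 0 < c by apply: Rmin_glb_lt => //; lra.
have [m mc] := INR_archimed c 1 cp.
have m0 : (0 < m)%N by case: m mc => [|m] //=; lra.
have mp : 0 < INR m by apply: lt_0_INR; apply/ltP.
have im : / INR m < c.
  apply: (Rmult_lt_reg_l (INR m)) => //; rewrite Rinv_r; lra.
pose pt (g : seq nat) := fun i => INR (nth 0%N g i) / INR m.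
pose a (g : seq nat) i := (if Rlt_dec (F (pt g) i) (pt g i) then true else false) || (nth 0%N g i == m).
pose lab (g : seq nat) := find (a g) (iota 0%N N).
have ptb : forall g, grid N m g -> inbox N (pt g).
  by move=> g gg i iN; apply: INR_div_box => //; apply: grid_nth gg iN.
have labN : forall g, (lab g <= N)%N.
  by move=> g; rewrite /lab; have := find_size (a g) (iota 0%N N); rewrite size_iota.
have labi : forall g i, (i < N)%N -> lab g = i -> a g i.
  move=> g i iN e; have : has (a g) (iota 0%N N) by rewrite has_find size_iota /lab in e *; rewrite e.
  move/(nth_find 0%N); rewrite -/(lab g) e nth_iota //.
have labnot : forall g i, (i < N)%N -> (i < lab g)%N -> a g i = false.
  move=> g i iN il; have := before_find 0%N il; rewrite nth_iota //.
have Hl : labhyp N m lab.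
  split.
  - by move=> g _; apply: labN.
  - move=> g i gg iN g0; apply/eqP => e; have := labi g i iN e; rewrite /a g0.
    have pg0 : pt g i = 0 by rewrite /pt g0 /= /Rdiv Rmult_0_l.
    case: Rlt_dec => /= h; last by case: (m) m0.
    have := (FB _ (ptb g gg)) i iN; lra.
  - move=> g i gg iN gm; rewrite leqNgt; apply/negP => il.
    by have := labnot g i iN il; rewrite /a gm eqxx orbT.
have [b [p [bc pp Hall]]] := sperner m0 Hl.
have [jN jNN ljN] := Hall N (leqnn N).
set u := vert N b p jN.
have ub : inbox N (pt u) by apply: ptb; apply: vert_grid.
exists (pt u); split => // i iN.
have Fu : pt u i <= F (pt u) i.
  have := labnot u i iN; rewrite ljN => /(_ iN).
  by rewrite /a; case: Rlt_dec => //= h _; lra.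
have [ji jiN lji] := Hall i (ltnW iN).
set w := vert N b p ji.
have wb : inbox N (pt w) by apply: ptb; apply: vert_grid.
have Fw : F (pt w) i <= pt w i.
  have := labi w i iN lji; rewrite /a; case: Rlt_dec => /= h; first lra.
  move/eqP => e; have pw1 : pt w i = 1 by rewrite /pt e; field; lra.
  have := (FB _ wb) i iN; lra.
have cl : forall k, (k < N)%N -> Rabs (pt u k - pt w k) <= / INR m.
  move=> k kN; rewrite /pt /u /w !nth_vert //.
  rewrite /Rdiv -Rmult_minus_distr_r Rabs_mult (Rabs_right (/ INR m)); last first.
    by apply: Rle_ge; apply: Rlt_le; apply: Rinv_0_lt_compat.
  rewrite -{2}(Rmult_1_l (/ INR m)); apply: Rmult_le_compat_r.
    by apply: Rlt_le; apply: Rinv_0_lt_compat.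
  rewrite !plus_INR; apply: Rabs_le.
  by case: (_ < jN)%N; case: (_ < ji)%N; rewrite /=; lra.
have cuw : close N d (pt u) (pt w).
  move=> k kN; have := cl k kN; have := Rmin_l d (eps / 2); rewrite -/c; lra.
have h1 := Hd _ _ ub wb cuw i iN.
have h2 := cl i iN.
have := Rmin_r d (eps / 2); rewrite -/c => hc.
rewrite Rabs_right; last lra.
have := Rle_abs (F (pt u) i - F (pt w) i); have := Rle_abs (pt w i - pt u i).
rewrite (Rabs_minus_sym (pt w i)); lra.
Qed.

Unset Implicit Arguments. Unset Strict Implicit.
Open Scope R_scope.

Theorem brouwer N F : (forall x, inbox N x -> inbox N (F x)) -> contF N F ->
  exists x, inbox N x /\ forall i, (i < N)%N -> F x i = x i.
Proof.
move=> FB Fc; apply: NNPP => Hn.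
pose P t d := 0 < d /\ (inbox N t -> exists i, (i < N)%N /\ d <= Rabs (F t i - t i) / 3 /\
   forall y, inbox N y -> close N d t y -> Rabs (F t i - F y i) < Rabs (F t i - t i) / 3).
have Pex : forall t, exists d, P t d.
  move=> t; case: (classic (inbox N t)) => tb; last by exists 1; split => //; lra.
  have : exists i, (i < N)%N /\ F t i <> t i.
    apply: NNPP => H1; apply: Hn; exists t; split => // i iN.
    by apply: NNPP => H2; apply: H1; exists i.
  move=> [i [iN Hi]].
  have ep : 0 < Rabs (F t i - t i) / 3.
    have : F t i - t i <> 0 by lra.
    move/Rabs_pos_lt; lra.
  have [d dp Hd] := Fc t tb _ ep.
  exists (Rmin d (Rabs (F t i - t i) / 3)); split.
    by apply: Rmin_glb_lt.
  move=> _; exists i; split => //; split; first exact: Rmin_r.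
  move=> y yb cy; apply: Hd => // k kN; have := cy k kN; have := Rmin_l d (Rabs (F t i - t i) / 3); lra.
pose g t := epsilon (inhabits 1) (P t).
have gP : forall t, P t (g t) by move=> t; apply: epsilon_spec.
have [dd ddp Hdd] := @compact_gauge N g ltac:(move=> t; exact: (gP t).1).
have [y [yb Hy]] := approx_fp N F FB Fc dd ddp.
apply: (Hdd y yb) => -[t [tb [ty dt]]].
have [_ Ht] := gP t.
have [i [iN [gi Hi]]] := Ht tb.
have cty : close N (g t) t y.
  by move=> k kN; rewrite Rabs_minus_sym; apply: ty.
have h1 := Hi y yb cty.
have h2 := ty i iN.
have h3 := Hy i iN.
have := Rabs_triang (F t i - F y i) (F y i - y i).
have := Rabs_triang (F t i - F y i + (F y i - y i)) (y i - t i).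
rewrite (_ : F t i - F y i + (F y i - y i) + (y i - t i) = F t i - t i); last ring.
lra.
Qed.

Unset Implicit Arguments. Unset Strict Implicit.
Open Scope R_scope.

Definition cont_at N (g : (nat -> R) -> R) x := forall eps, 0 < eps -> exists2 d, 0 < d &
  forall y, inbox N y -> close N d x y -> Rabs (g x - g y) < eps.

Lemma ca_const N c x : cont_at N (fun _ => c) x.
Proof. move=> eps ep; exists 1; [lra|] => y _ _; rewrite Rminus_diag Rabs_R0 //. Qed.

Lemma ca_coord N i x : (i < N)%N -> cont_at N (fun y => y i) x.
Proof. move=> iN eps ep; exists eps => // y _ c; exact: c. Qed.

Lemma close_mono N d1 d2 x y : d1 <= d2 -> close N d1 x y -> close N d2 x y.
Proof. by move=> h c i iN; have := c i iN; lra. Qed.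

Lemma ca_two {N} {f g : (nat -> R) -> R} {x} :
  cont_at N f x -> cont_at N g x -> forall e, 0 < e -> exists2 d, 0 < d &
  forall y, inbox N y -> close N d x y -> Rabs (f x - f y) < e /\ Rabs (g x - g y) < e.
Proof.
move=> cf cg e ep; have [d1 d1p H1] := cf e ep; have [d2 d2p H2] := cg e ep.
exists (Rmin d1 d2); first exact: Rmin_glb_lt.
move=> y yb c; split.
  by apply: H1 => //; apply: close_mono c; apply: Rmin_l.
by apply: H2 => //; apply: close_mono c; apply: Rmin_r.
Qed.

Lemma ca_plus N f g x : cont_at N f x -> cont_at N g x -> cont_at N (fun y => f y + g y) x.
Proof.
move=> cf cg eps ep; have [d dp H] := ca_two cf cg (eps/2) ltac:(lra).
exists d => // y yb c; have [h1 h2] := H y yb c.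
have := Rabs_triang (f x - f y) (g x - g y).
rewrite (_ : f x - f y + (g x - g y) = f x + g x - (f y + g y)); [lra|ring].
Qed.

Lemma ca_opp N f x : cont_at N f x -> cont_at N (fun y => - f y) x.
Proof.
move=> cf eps ep; have [d dp H] := cf eps ep; exists d => // y yb c.
by rewrite (_ : - f x - - f y = - (f x - f y)); [rewrite Rabs_Ropp; apply: H|ring].
Qed.

Lemma ca_minus N f g x : cont_at N f x -> cont_at N g x -> cont_at N (fun y => f y - g y) x.
Proof. by move=> cf cg; apply: ca_plus => //; apply: ca_opp. Qed.

Lemma ca_mult N f g x : cont_at N f x -> cont_at N g x -> cont_at N (fun y => f y * g y) x.
Proof.
move=> cf cg eps ep.
set A := Rabs (f x) + Rabs (g x) + 1.
have Ap : 0 < A by rewrite /A; have := Rabs_pos (f x); have := Rabs_pos (g x); lra.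
set e := Rmin 1 (eps / (2 * A)).
have ep' : 0 < e by apply: Rmin_glb_lt; [lra|apply: Rdiv_lt_0_compat; lra].
have e1 : e <= 1 by apply: Rmin_l.
have e2 : e * (2 * A) <= eps.
  have := Rmin_r 1 (eps / (2 * A)); rewrite -/e => h.
  have : e * (2 * A) <= eps / (2 * A) * (2 * A) by apply: Rmult_le_compat_r; lra.
  rewrite /Rdiv Rmult_assoc Rinv_l; lra.
have [d dp H] := ca_two cf cg e ep'.
exists d => // y yb c; have [h1 h2] := H y yb c.
rewrite (_ : f x * g x - f y * g y = (f x - f y) * g y + f x * (g x - g y)); last ring.
apply: Rle_lt_trans (Rabs_triang _ _) _.
rewrite !Rabs_mult.
have gy : Rabs (g y) <= Rabs (g x) + 1.
  have := Rabs_triang_inv (g y) (g x); rewrite Rabs_minus_sym; lra.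
have t1 : Rabs (f x - f y) * Rabs (g y) <= e * (Rabs (g x) + 1).
  apply: Rmult_le_compat; try exact: Rabs_pos; lra.
have t2 : Rabs (f x) * Rabs (g x - g y) <= Rabs (f x) * e.
  apply: Rmult_le_compat_l; [exact: Rabs_pos|lra].
have t3 : Rabs (f x) * Rabs (g x - g y) < Rabs (f x) * e + e.
  have := Rabs_pos (f x); lra.
have : e * (Rabs (g x) + 1) + (Rabs (f x) * e + e) <= e * (2 * A).
  rewrite /A; have := Rabs_pos (f x); have := Rabs_pos (g x); nra.
lra.
Qed.

Lemma ca_inv N g x : g x <> 0 -> cont_at N g x -> cont_at N (fun y => / g y) x.
Proof.
move=> gx0 cg eps ep.
set a := Rabs (g x).
have ap : 0 < a by apply: Rabs_pos_lt.
set e := Rmin (a / 2) (eps * (a * a) / 2).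
have aa : 0 < eps * (a * a) by apply: Rmult_lt_0_compat => //; apply: Rmult_lt_0_compat.
have ep' : 0 < e by apply: Rmin_glb_lt; lra.
have [d dp H] := cg e ep'.
exists d => // y yb c; have h := H y yb c.
have ea : e <= a / 2 by apply: Rmin_l.
have eb : e <= eps * (a * a) / 2 by apply: Rmin_r.
have gy : a / 2 < Rabs (g y).
  have := Rabs_triang_inv (g x) (g y); rewrite -/a; lra.
have gy0 : g y <> 0 by move=> e0; rewrite e0 Rabs_R0 in gy; lra.
rewrite (_ : / g x - / g y = (g y - g x) / (g x * g y)); last by field.
rewrite /Rdiv Rabs_mult Rabs_inv Rabs_mult -/a Rabs_minus_sym.
have ay : 0 < a * Rabs (g y) by nra.
apply: (Rmult_lt_reg_r (a * Rabs (g y))) => //.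
rewrite Rmult_assoc Rinv_l; last lra.
rewrite Rmult_1_r.
have : eps * (a * a) / 2 <= eps * (a * Rabs (g y)).
  have : a * a / 2 <= a * Rabs (g y) by nra.
  nra.
lra.
Qed.

Lemma ca_ext N f g x : (forall y, inbox N y -> f y = g y) -> inbox N x ->
  cont_at N g x -> cont_at N f x.
Proof.
move=> e xb cg eps ep; have [d dp H] := cg eps ep; exists d => // y yb c.
by rewrite !e //; apply: H.
Qed.

Lemma ca_min N f g x : cont_at N f x -> cont_at N g x -> cont_at N (fun y => Rmin (f y) (g y)) x.
Proof.
move=> cf cg eps ep; have [d dp H] := ca_two cf cg eps ep.
exists d => // y yb c; have [h1 h2] := H y yb c.
move/Rabs_def2: h1 => [h1 h1']; move/Rabs_def2: h2 => [h2 h2'].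
apply: Rabs_def1; rewrite /Rmin; do 2 case: Rle_dec; lra.
Qed.

Lemma ca_max N f g x : cont_at N f x -> cont_at N g x -> cont_at N (fun y => Rmax (f y) (g y)) x.
Proof.
move=> cf cg eps ep; have [d dp H] := ca_two cf cg eps ep.
exists d => // y yb c; have [h1 h2] := H y yb c.
move/Rabs_def2: h1 => [h1 h1']; move/Rabs_def2: h2 => [h2 h2'].
apply: Rabs_def1; rewrite /Rmax; do 2 case: Rle_dec; lra.
Qed.

Lemma ca_sum (A : Type) N (f : (nat -> R) -> A -> R) (l : list A) x :
  (forall k, List.In k l -> cont_at N (fun y => f y k) x) ->
  cont_at N (fun y => List.fold_right (fun k acc => f y k + acc) 0 l) x.
Proof.
elim: l => [|k l IH] H /=; first exact: ca_const.
apply: ca_plus; first by apply: H; left.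
by apply: IH => k' h; apply: H; right.
Qed.

Set Implicit Arguments. Unset Strict Implicit.
Open Scope R_scope.

Lemma contF_of N F : (forall i, (i < N)%N -> forall x, inbox N x -> cont_at N (fun y => F y i) x) ->
  contF N F.
Proof.
move=> H x xb eps ep.
suff : forall M, (M <= N)%N -> exists2 d, 0 < d & forall y, inbox N y -> close N d x y ->
   forall i, (i < M)%N -> Rabs (F x i - F y i) < eps.
  by move/(_ N (leqnn N)).
elim=> [|M IH] MN.
  by exists 1; [lra|] => y _ _ i.
have [d1 d1p H1] := IH (ltnW MN).
have [d2 d2p H2] := H M MN x xb eps ep.
exists (Rmin d1 d2); first exact: Rmin_glb_lt.
move=> y yb c i; rewrite ltnS leq_eqVlt => /orP[/eqP ->|iM].
  by apply: H2 => //; apply: close_mono c; apply: Rmin_r.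
by apply: H1 => //; apply: close_mono c; apply: Rmin_l.
Qed.

Lemma sumR_nonneg (A : Type) (f : A -> R) l : (forall k, List.In k l -> 0 <= f k) -> 0 <= sumR f l.
Proof.
elim: l => [|k l IH] H /=; first lra.
have := H k (or_introl erefl); have := IH (fun z h => H z (or_intror h)); lra.
Qed.

Lemma sumR_le (A : Type) (f g : A -> R) l : (forall k, List.In k l -> f k <= g k) ->
  sumR f l <= sumR g l.
Proof.
elim: l => [|k l IH] H /=; first lra.
have := H k (or_introl erefl); have := IH (fun z h => H z (or_intror h)); lra.
Qed.

Lemma sumR_ext (A : Type) (f g : A -> R) l : (forall k, List.In k l -> f k = g k) ->
  sumR f l = sumR g l.
Proof.
elim: l => [|k l IH] H //=.
by rewrite H ?IH //; [move=> z h; apply: H; right|left].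
Qed.

Lemma sumR_term (A : Type) (f : A -> R) l k : List.In k l -> (forall z, List.In z l -> 0 <= f z) ->
  f k <= sumR f l.
Proof.
elim: l => [|z l IH] //= [->|h] H.
  have := sumR_nonneg (fun z h => H z (or_intror h)); lra.
have := IH h (fun z h => H z (or_intror h)); have := H z (or_introl erefl); lra.
Qed.

Section Fin.
Variable FS : system.
Hypothesis wf : well_formed FS.

Notation n := (nbanks FS).
Notation cs := (contracts FS).

Lemma wf_k k : List.In k cs ->
  [/\ (debtor k < n)%N, (creditor k < n)%N, 0 < weight k &
      forall w, kind k = CDS w -> (w < n)%N].
Proof.
case: wf => _ [_ [H _]] kin; have [h1 [h2 [h3 [h4 [h5 h6]]]]] := H k kin.
split; [exact/ltP|exact/ltP|exact: h4|].
by move=> w e; have [h _] := h6 w e; apply/ltP.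
Qed.

Lemma wf_ext v : (v < n)%N -> 0 <= ext FS v.
Proof. by case: wf => _ [H _] vn; apply: H; apply/ltP. Qed.

Definition dlist v := List.filter (fun k => Nat.eqb (debtor k) v) cs.
Definition Lmax v := sumR weight (dlist v).
Definition Dv v := sumR (fun k => match kind k with Debt => weight k | CDS _ => 0 end) (dlist v).

Lemma in_dlist k v : List.In k (dlist v) -> List.In k cs /\ debtor k = v.
Proof. by rewrite /dlist List.filter_In => -[h /Nat.eqb_eq]. Qed.

Lemma Dv_pos k w : List.In k cs -> kind k = CDS w -> 0 < Dv w.
Proof.
case: wf => _ [_ [_ H]] kin kw.
have [k' [k'in [k'd [k'w k'p]]]] := H k w kin kw.
have k'l : List.In k' (dlist w) by rewrite /dlist List.filter_In Nat.eqb_eq.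
have := sumR_term (f := fun k => match kind k with Debt => weight k | CDS _ => 0 end) k'l.
rewrite k'd => h; apply: Rlt_le_trans (h _); first done.
move=> z /in_dlist [zin _]; have [_ _ zp _] := wf_k zin; case: (kind z) => [|?]; lra.
Qed.

Definition boxn (x : nat -> R) := forall w, (w < n)%N -> 0 <= x w <= 1.

Lemma liab_bounds x k : boxn x -> List.In k cs ->
  0 <= liab x k <= weight k /\
  (match kind k with Debt => weight k | CDS _ => 0 end) <= liab x k.
Proof.
move=> xb kin; have [_ _ wp wn] := wf_k kin.
rewrite /liab; case e: (kind k) => [|w]; first lra.
have := xb w (wn w e); nra.
Qed.

Lemma liab_bank_bounds x v : boxn x -> Dv v <= liab_bank FS x v <= Lmax v.
Proof.
move=> xb; rewrite /liab_bank /Dv /Lmax -/(dlist v); split; apply: sumR_le => k /in_dlist [kin _];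
  have := liab_bounds xb kin; lra.
Qed.

Lemma Lmax_nonneg v : 0 <= Lmax v.
Proof. apply: sumR_nonneg => k /in_dlist [kin _]; have [_ _ ? _] := wf_k kin; lra. Qed.

Lemma Dv_nonneg v : 0 <= Dv v.
Proof. apply: sumR_nonneg => k /in_dlist [kin _]; have [_ _ ? _] := wf_k kin; case: (kind k) => [|?]; lra. Qed.

Lemma liab_prio_ge x k : boxn x -> List.In k cs -> liab x k <= liab_prio FS x (debtor k) (prio k).
Proof.
move=> xb kin; apply: sumR_term.
  by rewrite List.filter_In !Nat.eqb_refl.
by move=> z; rewrite List.filter_In => -[zin _]; have := liab_bounds xb zin; lra.
Qed.


Definition Yv (x : nat -> R) v := x (n + v)%N * Lmax v.
Definition mypay x k :=
  if Req_EM_T (liab_prio FS x (debtor k) (prio k)) 0 then 0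
  else liab x k * Rmin 1 (Rmax 0 ((Yv x (debtor k) - liab_le FS x (debtor k) (Nat.sub (prio k) 1))
                                  / liab_prio FS x (debtor k) (prio k))).
Definition clist v := List.filter (fun k => Nat.eqb (creditor k) v) cs.
Definition myassets x v := ext FS v + sumR (mypay x) (clist v).
Definition Gm x i :=
  if (i < n)%N then
    (if Rlt_dec 0 (Dv i) then Rmin 1 (myassets x i / liab_bank FS x i) else 1)
  else if (i < n + n)%N then
    (if Rlt_dec 0 (Lmax (i - n)) then
       Rmin (liab_bank FS x (i - n)) (myassets x (i - n)) / Lmax (i - n) else 0)
  else 0.

Lemma in_clist k v : List.In k (clist v) -> List.In k cs /\ creditor k = v.
Proof. by rewrite /clist List.filter_In => -[h /Nat.eqb_eq]. Qed.

Lemma boxn_of x : inbox (n + n) x -> boxn x.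
Proof. by move=> h w wn; apply: h; lia. Qed.

Lemma clamp01 a : 0 <= Rmin 1 (Rmax 0 a) <= 1.
Proof. rewrite /Rmin /Rmax; do 2 case: Rle_dec; lra. Qed.

Lemma mypay_bounds x k : boxn x -> List.In k cs -> 0 <= mypay x k <= liab x k.
Proof.
move=> xb kin; rewrite /mypay; case: Req_EM_T => ? /=.
  have := liab_bounds xb kin; lra.
have := liab_bounds xb kin; have := clamp01 ((Yv x (debtor k) - liab_le FS x (debtor k) (Nat.sub (prio k) 1))
                                  / liab_prio FS x (debtor k) (prio k)).
set c := Rmin _ _; nra.
Qed.

Lemma myassets_nonneg x v : boxn x -> (v < n)%N -> 0 <= myassets x v.
Proof.
move=> xb vn; rewrite /myassets; have := wf_ext vn.
have : 0 <= sumR (mypay x) (clist v).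
  by apply: sumR_nonneg => k /in_clist [kin _]; have := mypay_bounds xb kin; lra.
lra.
Qed.

Lemma lbank_nonneg x v : boxn x -> 0 <= liab_bank FS x v.
Proof. by move=> xb; have := liab_bank_bounds v xb; have := Dv_nonneg v; lra. Qed.

Lemma Gm_box x : inbox (n + n) x -> inbox (n + n) (Gm x).
Proof.
move=> xb; have xb' := boxn_of xb; move=> i iN; rewrite /Gm.
case: ifP => i1.
  case: Rlt_dec => hD /=; last lra.
  have := liab_bank_bounds i xb'; have := myassets_nonneg xb' i1 => hA hL.
  have : 0 <= myassets x i / liab_bank FS x i.
    by apply: Rmult_le_pos => //; apply: Rlt_le; apply: Rinv_0_lt_compat; lra.
  rewrite /Rmin; case: Rle_dec; lra.
rewrite iN; case: Rlt_dec => hL /=; last lra.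
have vn : (i - n < n)%N by lia.
have := liab_bank_bounds (i - n) xb'; have := myassets_nonneg xb' vn => hA hB.
have h0 : 0 <= Rmin (liab_bank FS x (i - n)) (myassets x (i - n)).
  by have := Dv_nonneg (i - n); rewrite /Rmin; case: Rle_dec; lra.
have h1 : Rmin (liab_bank FS x (i - n)) (myassets x (i - n)) <= Lmax (i - n).
  by rewrite /Rmin; case: Rle_dec; lra.
split; first by apply: Rmult_le_pos => //; apply: Rlt_le; apply: Rinv_0_lt_compat.
apply: (Rmult_le_reg_r (Lmax (i - n))) => //.
rewrite /Rdiv Rmult_assoc Rinv_l; lra.
Qed.

Notation N := (n + n)%N.

Lemma ca_local f g x d0 : 0 < d0 -> (forall y, inbox N y -> close N d0 x y -> f y = g y) ->
  f x = g x -> cont_at N g x -> cont_at N f x.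
Proof.
move=> d0p H e cg eps ep; have [d dp Hd] := cg eps ep.
exists (Rmin d d0); first exact: Rmin_glb_lt.
move=> y yb c; rewrite e H //; last by apply: close_mono c; apply: Rmin_r.
by apply: Hd => //; apply: close_mono c; apply: Rmin_l.
Qed.

Lemma ca_liab k x : List.In k cs -> cont_at N (fun y => liab y k) x.
Proof.
move=> kin; have [_ _ _ wn] := wf_k kin; rewrite /liab.
case e: (kind k) => [|w]; first exact: ca_const.
apply: ca_mult; first exact: ca_const.
apply: ca_minus; first exact: ca_const.
apply: ca_coord; have := wn w e; lia.
Qed.

Lemma ca_lbank v x : cont_at N (fun y => liab_bank FS y v) x.
Proof.
rewrite /liab_bank; apply: (ca_sum _ _ liab) => k.
by rewrite List.filter_In => -[kin _]; apply: ca_liab.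
Qed.

Lemma ca_lprio v r x : cont_at N (fun y => liab_prio FS y v r) x.
Proof.
rewrite /liab_prio; apply: (ca_sum _ _ liab) => k.
by rewrite List.filter_In => -[kin _]; apply: ca_liab.
Qed.

Lemma ca_lle v r x : cont_at N (fun y => liab_le FS y v r) x.
Proof.
elim: r => [|r IH] /=; first exact: ca_const.
by apply: ca_plus => //; apply: ca_lprio.
Qed.

Lemma ca_Y v x : (v < n)%N -> cont_at N (fun y => Yv y v) x.
Proof.
move=> vn; rewrite /Yv; apply: ca_mult; last exact: ca_const.
apply: ca_coord; lia.
Qed.

Lemma lprio_nonneg y v r : boxn y -> 0 <= liab_prio FS y v r.
Proof.
move=> yb; apply: sumR_nonneg => k; rewrite List.filter_In => -[kin _].
by have := liab_bounds yb kin; lra.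
Qed.

Lemma ca_mypay k x : inbox N x -> List.In k cs -> cont_at N (fun y => mypay y k) x.
Proof.
move=> xb kin; have [dn _ _ _] := wf_k kin.
have cL := ca_lprio (debtor k) (prio k) x.
set L := fun y => liab_prio FS y (debtor k) (prio k).
case: (Req_EM_T (L x) 0) => L0.
  move=> eps ep; have [d dp Hd] := cL eps ep.
  exists d => // y yb c.
  have -> : mypay x k = 0 by rewrite /mypay; case: Req_EM_T.
  have := Hd y yb c; rewrite -/(L x) -/(L y) L0 Rminus_0_l Rabs_Ropp => h.
  have := mypay_bounds (boxn_of yb) kin; have := liab_prio_ge (boxn_of yb) kin.
  rewrite -/(L y) => h1 h2.
  rewrite Rminus_0_l Rabs_Ropp Rabs_right; last lra.
  have := Rle_abs (L y); lra.
have Lp : 0 < L x by have := lprio_nonneg (debtor k) (prio k) (boxn_of xb); rewrite -/(L x); lra.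
have [d0 d0p Hd0] := cL (L x / 2) ltac:(lra).
apply: (ca_local (g := fun y => liab y k * Rmin 1 (Rmax 0 ((Yv y (debtor k) -
     liab_le FS y (debtor k) (Nat.sub (prio k) 1)) * / L y)))) d0p _ _ _.
- move=> y yb c; rewrite /mypay; case: Req_EM_T => e /=; last by [].
  have h := Hd0 y yb c; move: h Lp; rewrite /L /= e => /Rabs_def2 h; lra.
- rewrite /mypay; case: Req_EM_T => e /=; last by [].
  by case: (L0 e).
apply: ca_mult; first exact: ca_liab.
apply: ca_min; first exact: ca_const.
apply: ca_max; first exact: ca_const.
apply: ca_mult; last by apply: ca_inv => //; lra.
by apply: ca_minus; [apply: ca_Y|apply: ca_lle].
Qed.

Lemma ca_assets v x : inbox N x -> cont_at N (fun y => myassets y v) x.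
Proof.
move=> xb; rewrite /myassets; apply: ca_plus; first exact: ca_const.
apply: (ca_sum _ _ mypay) => k /in_clist [kin _]; exact: ca_mypay.
Qed.

Lemma ca_G i x : inbox N x -> cont_at N (fun y => Gm y i) x.
Proof.
move=> xb; rewrite /Gm; case i1: (i < n)%N.
  case: (Rlt_dec 0 (Dv i)) => hD /=; last exact: ca_const.
  apply: ca_min; first exact: ca_const.
  apply: ca_mult; first exact: ca_assets.
  apply: ca_inv; last exact: ca_lbank.
  have := liab_bank_bounds i (boxn_of xb); lra.
case: (i < n + n)%N; last exact: ca_const.
case: (Rlt_dec 0 (Lmax (i - n))) => hL /=; last exact: ca_const.
apply: ca_mult; last exact: ca_const.
by apply: ca_min; [apply: ca_lbank|apply: ca_assets].
Qed.

Definition rf x v :=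
  if Rlt_dec 0 (Dv v) then x v
  else if Rlt_dec 0 (liab_bank FS x v) then Yv x v / liab_bank FS x v else 1.

Lemma liab_rf x k : List.In k cs -> liab (rf x) k = liab x k.
Proof.
move=> kin; rewrite /liab; case e: (kind k) => [|w] //.
have hw := Dv_pos kin e.
by rewrite /rf; case: Rlt_dec => //= h; lra.
Qed.

Lemma lbank_rf x v : liab_bank FS (rf x) v = liab_bank FS x v.
Proof.
by rewrite /liab_bank; apply: sumR_ext => k; rewrite List.filter_In => -[kin _]; apply: liab_rf.
Qed.

Lemma lprio_rf x v r : liab_prio FS (rf x) v r = liab_prio FS x v r.
Proof.
by rewrite /liab_prio; apply: sumR_ext => k; rewrite List.filter_In => -[kin _]; apply: liab_rf.
Qed.

Lemma lle_rf x v r : liab_le FS (rf x) v r = liab_le FS x v r.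
Proof. by elim: r => [|r IH] //=; rewrite IH lprio_rf. Qed.

Section Fixed.
Variable x : nat -> R.
Hypothesis xb : inbox N x.
Hypothesis fx : forall i, (i < N)%N -> Gm x i = x i.

Let xb' := boxn_of xb.

Lemma Yeq v : (v < n)%N -> Yv x v = Rmin (liab_bank FS x v) (myassets x v).
Proof.
move=> vn; have := @fx (n + v)%N ltac:(lia).
rewrite /Gm ifF; last lia.
rewrite ifT; last lia.
rewrite (_ : (n + v - n)%N = v); last lia.
have hA := myassets_nonneg xb' vn.
have hL := liab_bank_bounds v xb'.
have hD := Dv_nonneg v.
have hM := Lmax_nonneg v.
rewrite /Yv; case: Rlt_dec => h /= <-.
  by field; lra.
have -> : Lmax v = 0 by lra.
rewrite Rmult_0_r /Rmin; case: Rle_dec; lra.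
Qed.

Lemma rfL v : (v < n)%N -> rf x v * liab_bank FS x v = Yv x v.
Proof.
move=> vn; rewrite (Yeq vn).
have hA := myassets_nonneg xb' vn.
have hL := liab_bank_bounds v xb'.
have hD := Dv_nonneg v.
rewrite /rf; case: Rlt_dec => hd /=.
  rewrite -(@fx v) ?(ltn_addr _ vn) // /Gm vn; case: Rlt_dec => //= _.
  set A := myassets x v; set L := liab_bank FS x v.
  have Lp : 0 < L by rewrite /L; lra.
  rewrite /Rmin; case: Rle_dec => h1; case: Rle_dec => h2.
  - by rewrite Rmult_1_l.
  - exfalso; apply: h2; apply: (Rmult_le_reg_r (/ L)); first exact: Rinv_0_lt_compat.
    rewrite Rinv_r; lra.
  - exfalso; apply: h1.
    have : L / L <= A / L by apply: Rmult_le_compat_r => //; apply: Rlt_le; apply: Rinv_0_lt_compat.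
    rewrite /Rdiv Rinv_r; lra.
  - by field; lra.
case: Rlt_dec => hl /=.
  rewrite -(Yeq vn); field; lra.
have -> : liab_bank FS x v = 0 by lra.
rewrite Rmult_0_r /Rmin; case: Rle_dec; lra.
Qed.

Lemma pay_eq k : List.In k cs -> payment FS (rf x) k = mypay x k.
Proof.
move=> kin; have [dn _ _ _] := wf_k kin.
rewrite /payment /mypay /= !lprio_rf lle_rf lbank_rf liab_rf // rfL //.
by case: (Req_dec_T (liab_prio FS x (debtor k) (prio k)) 0).
Qed.

Lemma assets_eq v : assets FS (rf x) v = myassets x v.
Proof.
rewrite /assets /myassets; congr Rplus; apply: sumR_ext => k.
by rewrite List.filter_In => -[kin _]; apply: pay_eq.
Qed.

Lemma rf_sol : is_solution FS (rf x).
Proof.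
move=> v /ltP vn.
rewrite assets_eq lbank_rf.
have hY := rfL vn; rewrite (Yeq vn) in hY.
have hA := myassets_nonneg xb' vn.
have hL := liab_bank_bounds v xb'.
have hD := Dv_nonneg v.
set A := myassets x v in hY hA *; set L := liab_bank FS x v in hY hL *.
have rb : 0 <= rf x v <= 1.
  rewrite /rf; case: Rlt_dec => hd /=; first by apply: xb; lia.
  case: Rlt_dec => hl /=; last lra.
  rewrite (Yeq vn) -/A -/L; split.
    apply: Rmult_le_pos; first by rewrite /Rmin; case: Rle_dec; lra.
    by apply: Rlt_le; apply: Rinv_0_lt_compat.
  have hl' : 0 < L := hl.
  have h : Rmin L A <= L by rewrite /Rmin; case: Rle_dec; lra.
  have := Rmult_le_compat_r (/ L) _ _ (Rlt_le _ _ (Rinv_0_lt_compat _ hl')) h.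
  rewrite Rinv_r /Rdiv; lra.
split => //; split.
- move=> hge; case: (Rlt_dec 0 L) => hl.
    have : rf x v * L = L by rewrite hY /Rmin; case: Rle_dec; lra.
    move=> h; apply: (Rmult_eq_reg_r L); [lra|lra].
  have L0 : L = 0 by lra.
  move: hY rb; rewrite /rf; case: Rlt_dec => hd /=.
    move=> _ _; rewrite -(@fx v) ?(ltn_addr _ vn) // /Gm vn; case: Rlt_dec => //= _.
    lra.
  by case: Rlt_dec => //= h; lra.
- move=> hlt; have Lp : 0 < L by lra.
  have e : rf x v * L = A by rewrite hY /Rmin; case: Rle_dec; lra.
  rewrite -e; field; lra.
Qed.

End Fixed.

Theorem exists_sol : exists r, is_solution FS r.
Proof.
have [x [xb fx]] := brouwer N Gm Gm_box (contF_of (fun i _ x xb => ca_G i xb)).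
by exists (rf x); apply: rf_sol.
Qed.

End Fin.



Theorem mainTheorem1 (FS : system) :
  well_formed FS -> exists r : nat -> R, is_solution FS r.
Proof. move=> wf; exact: (exists_sol wf). Qed.
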